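(* Let $f(p)=1+\sum_{n\ge1}a_np^{2n}$ with $a_n\ge0$ for all $n$ and the series converging for all $p\in\mathbb R$, and set $g(s)=f(\sqrt{|s|})$. Then $g$ is convex and nondecreasing on $[0,\infty)$, $g(p^2)=f(p)$, and for every unit vector $\psi$ in the standard model with $\psi\in C_c^\infty((-k_{\max},k_{\max}))$, $$\Delta_\psi\mathbf x\,\Delta_\psi\mathbf p\ \ge\ \tfrac14\,g(\Delta_\psi\mathbf p)^2,\qquad\text{i.e.}\qquad \Delta_\psi\mathbf x\ge\frac{f(\sqrt{\Delta_\psi\mathbf p})^2}{4\Delta_\psi\mathbf p}.$$
   Context: Standard model: $k_{\max}=\int_0^\infty dp/f(p)\in(0,\infty]$, $p(k)$ the inverse of $p\mapsto\int_0^pds/f(s)$, Hilbert space $L^2([-k_{\max},k_{\max}],dk)$ (or $L^2(\mathbb R)$ if $k_{\max}=\infty$), $\mathbf x=i\,d/dk$, $\mathbf p=$ multiplication by $p(k)$, so that $[\mathbf x,\mathbf p]=if(\mathbf p)$ on such $\psi$. $\Delta_\psi A=\langle\psi,A^2\psi\rangle-\langle\psi,A\psi\rangle^2$. *)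

(* Defs.v *)
From Stdlib Require Import Reals Lra ClassicalEpsilon.
Open Scope R_scope.

(* Total oriented Riemann integral: the value of RiemannInt when g is
   Riemann integrable on [a,b] (independent of the integrability proof);
   an arbitrary value otherwise. *)
Definition Rint (g : R -> R) (a b : R) : R :=
  epsilon (inhabits 0)
    (fun I => exists pr : Riemann_integrable g a b, RiemannInt pr = I).

Definition gfun (f : R -> R) (s : R) : R := f (sqrt (Rabs s)).

Definition Pfun (f : R -> R) (p : R) : R := Rint (fun s => / f s) 0 p.

(* t < k_max, where k_max = int_0^oo dp/f(p) = sup_q P(q) (possibly +oo) *)
Definition lt_kmax (f : R -> R) (t : R) : Prop := exists q, t < Pfun f q.

Definition pfun (f : R -> R) (k : R) : R :=
  epsilon (inhabits 0) (fun q => Pfun f q = k).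

(* C^infinity real function given with its sequence of derivatives:
   D 0 is the function, D (S n) is the derivative of D n. *)
Definition smooth_seq (D : nat -> R -> R) : Prop :=
  forall n x, derivable_pt_lim (D n) x (D (S n) x).

(* A complex function psi = u + i v, and phi = fr + i fi; the inner product
   <psi, phi> = int conj(psi) phi over [a,b] (outside of which psi vanishes),
   split into real and imaginary parts. *)
Definition inner_re (a b : R) (u v fr fi : R -> R) : R :=
  Rint (fun k => u k * fr k + v k * fi k) a b.
Definition inner_im (a b : R) (u v fr fi : R -> R) : R :=
  Rint (fun k => u k * fi k - v k * fr k) a b.

(* Delta_psi A = <psi, A^2 psi> - <psi, A psi>^2 (real part; the quantity
   is real for the symmetric operators considered). Arguments: components
   of A psi (ar, ai) and of A^2 psi (br, bi). *)
Definition variance (a b : R) (u v ar ai br bi : R -> R) : R :=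
  inner_re a b u v br bi
  - (inner_re a b u v ar ai ^ 2 - inner_im a b u v ar ai ^ 2).

(* x = i d/dk:  x psi = i (u' + i v') = -v' + i u';  x^2 psi = -u'' - i v''. *)
Definition Delta_x (a b : R) (Du Dv : nat -> R -> R) : R :=
  variance a b (Du 0%nat) (Dv 0%nat)
    (fun k => - Dv 1%nat k) (fun k => Du 1%nat k)
    (fun k => - Du 2%nat k) (fun k => - Dv 2%nat k).

Definition Delta_p (f : R -> R) (a b : R) (u v : R -> R) : R :=
  variance a b u v
    (fun k => pfun f k * u k) (fun k => pfun f k * v k)
    (fun k => pfun f k * (pfun f k * u k)) (fun k => pfun f k * (pfun f k * v k)).

(* Main.v *)
Require Import Defs.
From Stdlib Require Import Reals Lra Lia Ranalysis5 ClassicalEpsilon.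
From Coquelicot Require Import Coquelicot.
Open Scope R_scope.

Lemma is_series_minusR u v x y : is_series u x -> is_series v y ->
  is_series (fun n => u n - v n) (x - y).
Proof. intros H1 H2. exact (is_series_minus _ _ _ _ H1 H2). Qed.

Lemma is_series_scalR u x c : is_series u x -> is_series (fun n => u n * c) (x * c).
Proof. apply is_series_scal_r. Qed.

Lemma is_series_0R : is_series (fun _ => 0) 0.
Proof.
  assert (H := is_series_scal_r 0 _ _ (is_series_geom (1/2) ltac:(rewrite Rabs_pos_eq; lra))).
  eapply is_series_ext; [|replace 0 with (/ (1 - 1/2) * 0) by ring; exact H].
  intros; simpl; ring.
Qed.

Lemma ser_nonneg u l : is_series u l -> (forall n, 0 <= u n) -> 0 <= l.
Proof.
  intros H Hn. rewrite <- (is_series_unique _ _ H).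
  rewrite <- (is_series_unique _ _ is_series_0R).
  apply Series_le. intros; split; [lra|auto]. eexists; eauto.
Qed.

Lemma shift1 (c : nat -> R) t L : c 0%nat = 1 -> is_series (fun n => c n * t ^ n) L ->
  is_series (fun n => c (S n) * t ^ (S n)) (L - 1).
Proof.
  intros H0 H. apply (is_series_incr_1 (fun n => c n * t ^ n)).
  match goal with |- is_series _ ?l => replace l with L; auto end.
  rewrite H0. assert (E : (L - 1 + 1 * 1 = L)%R) by ring. exact (eq_sym E).
Qed.

Lemma term_ineq n s s0 : 0 <= s -> 0 <= s0 ->
  0 <= s ^ (S n) - s0 ^ (S n) - INR (S n) * s0 ^ n * (s - s0).
Proof.
  intros hs hs0. induction n.
  - simpl. lra.
  - assert (E : s ^ (S (S n)) - s0 ^ (S (S n)) - INR (S (S n)) * s0 ^ (S n) * (s - s0)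
       = s * (s ^ (S n) - s0 ^ (S n) - INR (S n) * s0 ^ n * (s - s0))
         + INR (S n) * s0 ^ n * (s - s0) ^ 2).
    { rewrite S_INR. simpl. ring. }
    rewrite E. apply Rplus_le_le_0_compat. apply Rmult_le_pos; auto.
    apply Rmult_le_pos. apply Rmult_le_pos. apply pos_INR. apply pow_le; auto.
    apply pow2_ge_0.
Qed.

Lemma Rint_RInt g x y : ex_RInt g x y -> Rint g x y = RInt g x y.
Proof.
  intros H. pose proof (ex_RInt_Reals_0 _ _ _ H) as pr.
  unfold Rint.
  destruct (epsilon_spec (inhabits 0)
    (fun I => exists pr : Riemann_integrable g x y, RiemannInt pr = I)) as [pr' E].
  { exists (RiemannInt pr), pr. reflexivity. }
  rewrite <- E. symmetry. apply RInt_Reals.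
Qed.


Definition cc (a : nat -> R) (n : nat) : R :=
  match n with O => 1 | S m => a (S m) end.

Section S.
Variables (a : nat -> R) (f : R -> R).
Hypothesis ha : forall n, (1 <= n)%nat -> 0 <= a n.
Hypothesis hf : forall p, infinite_sum (fun n => a (S n) * p ^ (2 * S n)) (f p - 1).

Lemma cc_nonneg n : 0 <= cc a n.
Proof. destruct n; simpl; [lra|apply ha; lia]. Qed.

Lemma ser_at t : 0 <= t -> is_series (fun n => cc a n * t ^ n) (f (sqrt t)).
Proof.
  intros ht.
  apply is_series_decr_1.
  pose proof (hf (sqrt t)) as H.
  apply is_series_Reals in H.
  match goal with |- is_series _ ?l => replace l with (f (sqrt t) - 1) end.
  2:{ simpl. unfold plus, opp; simpl. ring. }
  eapply is_series_ext; [|exact H].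
  intros n. unfold cc. rewrite pow_mult, pow2_sqrt by exact ht. reflexivity.
Qed.

Lemma f_even p : f (- p) = f p.
Proof.
  pose proof (hf p) as H1. pose proof (hf (- p)) as H2.
  enough (f (-p) - 1 = f p - 1) by lra.
  apply is_series_Reals in H1. apply is_series_Reals in H2.
  eapply is_series_unique in H1. eapply is_series_unique in H2.
  rewrite <- H1, <- H2. apply Series_ext. intros n.
  rewrite !pow_mult. replace ((-p)^2) with (p^2) by ring. reflexivity.
Qed.

Lemma cv_disk s : CV_disk (cc a) s.
Proof.
  unfold CV_disk.
  eexists. eapply is_series_ext; [|apply (ser_at (Rabs s) (Rabs_pos s))].
  intros n. simpl. rewrite Rabs_mult, <- RPow_abs, (Rabs_pos_eq (cc a n)) by apply cc_nonneg.
  reflexivity.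
Qed.

Lemma rad x : Rbar_lt (Rabs x) (CV_radius (cc a)).
Proof.
  destruct (Lub_Rbar_correct (CV_disk (cc a))) as [Hub _].
  unfold CV_radius.
  eapply Rbar_lt_le_trans with (Rabs x + 1).
  simpl; lra. apply Hub. apply cv_disk.
Qed.

Definition A := PSeries (cc a).

Lemma A_eq t : 0 <= t -> A t = f (sqrt t).
Proof. intros ht. apply is_pseries_unique. apply is_pseries_R. apply ser_at; auto. Qed.

Lemma f_A p : f p = A (p ^ 2).
Proof.
  rewrite A_eq by (apply pow2_ge_0). replace (p^2) with (Rsqr p) by (unfold Rsqr; ring).
  rewrite sqrt_Rsqr_abs.
  destruct (Rle_dec 0 p). rewrite Rabs_pos_eq; auto.
  rewrite Rabs_left by lra. rewrite f_even; auto.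
Qed.

Lemma A_series t : is_series (fun n => cc a n * t ^ n) (A t).
Proof. apply is_pseries_R. apply PSeries_correct. apply CV_radius_inside. apply rad. Qed.

Lemma A_ge1 s : 0 <= s -> 1 <= A s.
Proof.
  intros hs. pose proof (shift1 (cc a) s (A s) eq_refl (A_series s)) as H.
  apply ser_nonneg in H. lra. intros n. apply Rmult_le_pos. apply cc_nonneg. apply pow_le; auto.
Qed.

Lemma tangent s0 : 0 <= s0 -> exists D, 0 <= D /\ forall s, 0 <= s -> A s0 + D * (s - s0) <= A s.
Proof.
  intros hs0.
  set (D := PSeries (PS_derive (cc a)) s0).
  assert (HD : is_series (fun n => PS_derive (cc a) n * s0 ^ n) D).
  { apply is_pseries_R. apply PSeries_correct. apply ex_pseries_derive. apply rad. }
  exists D. split.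
  - apply (ser_nonneg _ _ HD). intros n. unfold PS_derive.
    apply Rmult_le_pos. apply Rmult_le_pos. apply pos_INR. apply cc_nonneg. apply pow_le; auto.
  - intros s hs.
    pose proof (shift1 (cc a) s (A s) eq_refl (A_series s)) as H1.
    pose proof (shift1 (cc a) s0 (A s0) eq_refl (A_series s0)) as H2.
    pose proof (is_series_minusR _ _ _ _ H1 H2) as H3.
    pose proof (is_series_minusR _ _ _ _ H3 (is_series_scalR _ _ (s - s0) HD)) as H4.
    apply ser_nonneg in H4. lra.
    intros n. unfold PS_derive.
    replace (cc a (S n) * s ^ S n - cc a (S n) * s0 ^ S n - INR (S n) * cc a (S n) * s0 ^ n * (s - s0))
      with (cc a (S n) * (s ^ (S n) - s0 ^ (S n) - INR (S n) * s0 ^ n * (s - s0))) by ring.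
    apply Rmult_le_pos. apply cc_nonneg. apply term_ineq; auto.
Qed.
Lemma f_ge1 p : 1 <= f p.
Proof. rewrite f_A. apply A_ge1; auto. apply pow2_ge_0. Qed.

Lemma f_derive p : ex_derive f p.
Proof.
  apply ex_derive_ext with (fun p => A (p ^ 2)).
  { intros t. symmetry. apply f_A. }
  apply ex_derive_comp. exists (PSeries (PS_derive (cc a)) (p ^ 2)).
  apply is_derive_PSeries. apply rad. auto_derive. auto.
Qed.

Lemma f_cont p : continuous f p.
Proof. apply (ex_derive_continuous (K:=R_AbsRing) (V:=R_NormedModule)), f_derive. Qed.

Lemma invf_derive p : ex_derive (fun s => / f s) p.
Proof. auto_derive. split. apply f_derive. split; auto. pose proof (f_ge1 p). lra. Qed.

Lemma invf_ex x y : ex_RInt (fun s => / f s) x y.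
Proof. apply (ex_RInt_continuous (V:=R_CompleteNormedModule)). intros. apply (ex_derive_continuous (K:=R_AbsRing) (V:=R_NormedModule)), invf_derive. Qed.

Definition Pc q := RInt (fun s => / f s) 0 q.

Lemma Pfun_Pc q : Pfun f q = Pc q.
Proof. unfold Pfun, Pc. apply Rint_RInt, invf_ex. Qed.

Lemma Pc_derive q : is_derive Pc q (/ f q).
Proof.
  apply (is_derive_RInt (fun s => / f s) Pc 0 q).
  - apply filter_forall. intros b. apply (RInt_correct (V:=R_CompleteNormedModule)), invf_ex.
  - apply (ex_derive_continuous (K:=R_AbsRing) (V:=R_NormedModule)), invf_derive.
Qed.

Lemma Pc_cont q : continuous Pc q.
Proof. apply (ex_derive_continuous (K:=R_AbsRing) (V:=R_NormedModule)). eexists; apply Pc_derive. Qed.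

Lemma Pc_lt x y : x < y -> Pc x < Pc y.
Proof.
  intros H. unfold Pc. rewrite <- (RInt_Chasles _ 0 x y) by apply invf_ex.
  assert (0 < RInt (fun s => / f s) x y).
  { replace 0 with (RInt (fun _ => 0) x y).
    2:{ rewrite RInt_const. unfold scal; simpl; unfold mult; simpl. ring. }
    apply RInt_lt; auto.
    - intros; apply (ex_derive_continuous (K:=R_AbsRing) (V:=R_NormedModule)), invf_derive.
    - intros; apply continuous_const.
    - intros t _. apply Rinv_0_lt_compat. pose proof (f_ge1 t); lra. }
  unfold plus; simpl. lra.
Qed.

Lemma Pc_odd q : Pc (- q) = - Pc q.
Proof.
  unfold Pc.
  pose proof (RInt_comp_lin (fun s => / f s) (-1) 0 0 q) as H.
  replace (-1 * 0 + 0) with 0 in H by ring.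
  replace (-1 * q + 0) with (- q) in H by ring.
  rewrite <- H by apply invf_ex.
  replace (- RInt (fun s : R => / f s) 0 q) with (scal (-1) (RInt (fun s : R => / f s) 0 q))
    by (unfold scal; simpl; unfold mult; simpl; ring).
  rewrite <- (RInt_scal (V:=R_CompleteNormedModule) (fun s => / f s) 0 q (-1)) by apply invf_ex.
  apply RInt_ext. intros t _. unfold scal; simpl; unfold mult; simpl.
  replace (-1 * t + 0) with (- t) by ring. rewrite f_even; auto.
Qed.

Lemma Pc_inj x y : Pc x = Pc y -> x = y.
Proof.
  intros H. destruct (Rtotal_order x y) as [h|[h|h]]; auto.
  apply Pc_lt in h; lra. apply Pc_lt in h; lra.
Qed.

Lemma Pc_le x y : x <= y -> Pc x <= Pc y.
Proof. intros [h|h]. left; apply Pc_lt; auto. subst; lra. Qed.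

Lemma Pc_continuity : continuity Pc.
Proof. intros x. apply continuity_pt_filterlim. apply Pc_cont. Qed.

Lemma pfun_ex k q : Pc q = k -> Pc (pfun f k) = k.
Proof.
  intros H. unfold pfun.
  pose proof (epsilon_spec (inhabits 0) (fun q => Pfun f q = k)) as E.
  rewrite <- Pfun_Pc. apply E. exists q. rewrite Pfun_Pc; auto.
Qed.

Lemma pfun_Pc q : pfun f (Pc q) = q.
Proof. apply Pc_inj. apply pfun_ex with q. reflexivity. Qed.

Lemma pfun_spec lb ub k : lb <= ub -> Pc lb <= k <= Pc ub ->
  Pc (pfun f k) = k /\ lb <= pfun f k <= ub.
Proof.
  intros Hlu Hk.
  destruct (IVT_gen Pc lb ub k Pc_continuity) as [x [Hx Ex]].
  { rewrite Rmin_left, Rmax_right; auto; apply Pc_le; auto. }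
  rewrite Rmin_left, Rmax_right in Hx by auto.
  assert (E : pfun f k = x). { apply Pc_inj. rewrite Ex. apply pfun_ex with x; auto. }
  rewrite E. auto.
Qed.

Lemma pfun_derive lb ub k : lb < ub -> Pc lb < k < Pc ub ->
  is_derive (pfun f) k (f (pfun f k)).
Proof.
  intros Hlu Hk.
  assert (Prf : forall a0, pfun f (Pc lb) <= a0 <= pfun f (Pc ub) -> derivable_pt Pc a0).
  { intros a0 _. exists (/ f a0). apply is_derive_Reals, Pc_derive. }
  assert (Hcomp : forall x0, Pc lb <= x0 <= Pc ub -> comp Pc (pfun f) x0 = id x0).
  { intros x0 Hx0. unfold comp, id. apply (pfun_spec lb ub); auto; lra. }
  assert (Hcont : continuity_pt (pfun f) k).
  { apply (continuity_pt_recip_interv Pc (pfun f) lb ub Hlu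
      (fun x y _ h _ => Pc_lt x y h)
      (fun x h1 h2 => Hcomp x (conj h1 h2))
      (fun x h1 h2 => proj2 (pfun_spec lb ub x (Rlt_le _ _ Hlu) (conj h1 h2)))
      (fun x _ => Pc_continuity x) k Hk). }
  assert (Hinc : pfun f (Pc lb) <= pfun f k <= pfun f (Pc ub)).
  { rewrite !pfun_Pc. apply (pfun_spec lb ub); lra. }
  assert (Hd : forall pr : derivable_pt Pc (pfun f k), derive_pt Pc (pfun f k) pr = / f (pfun f k)).
  { intros pr. apply derive_pt_eq_0. apply is_derive_Reals, Pc_derive. }
  pose proof (derivable_pt_lim_recip_interv Pc (pfun f) (Pc lb) (Pc ub) k Prf Hcont
     ltac:(apply Pc_lt; auto) Hk Hinc Hcomp) as H.
  rewrite Hd in H. apply is_derive_Reals.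
  replace (f (pfun f k)) with (1 / / f (pfun f k)).
  apply H. apply Rinv_neq_0_compat. pose proof (f_ge1 (pfun f k)); lra.
  field. pose proof (f_ge1 (pfun f k)); lra.
Qed.

Lemma gfun_A s : 0 <= s -> gfun f s = A s.
Proof. intros hs. unfold gfun. rewrite Rabs_pos_eq by auto. symmetry. apply A_eq; auto. Qed.

Lemma zero_left g x : continuity_pt g x -> (forall y, y < x -> g y = 0) -> g x = 0.
Proof.
  intros Hc Hz. destruct (Req_dec (g x) 0) as [|Hn]; auto. exfalso.
  destruct (Hc (Rabs (g x)) ltac:(apply Rabs_pos_lt; auto)) as [al [Hal H]].
  assert (Hy := H (x - al / 2) ltac:(split; [split; [exact I| lra] | simpl; unfold R_dist; rewrite Rabs_left; lra])).
  simpl in Hy. unfold R_dist in Hy. rewrite Hz in Hy by lra.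
  rewrite Rminus_0_l, Rabs_Ropp in Hy. lra.
Qed.

Lemma zero_right g x : continuity_pt g x -> (forall y, x < y -> g y = 0) -> g x = 0.
Proof.
  intros Hc Hz. destruct (Req_dec (g x) 0) as [|Hn]; auto. exfalso.
  destruct (Hc (Rabs (g x)) ltac:(apply Rabs_pos_lt; auto)) as [al [Hal H]].
  assert (Hy := H (x + al / 2) ltac:(split; [split; [exact I| lra] | simpl; unfold R_dist; rewrite Rabs_right; lra])).
  simpl in Hy. unfold R_dist in Hy. rewrite Hz in Hy by lra.
  rewrite Rminus_0_l, Rabs_Ropp in Hy. lra.
Qed.

Section Main.
Variables (Du Dv : nat -> R -> R) (lo hi lb ub : R).
Hypothesis sDu : smooth_seq Du.
Hypothesis sDv : smooth_seq Dv.
Hypothesis hlh : lo <= hi.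
Hypothesis hlu : lb < ub.
Hypothesis hlb : Pc lb < lo.
Hypothesis hub : hi < Pc ub.
Hypothesis supp : forall k, (k < lo \/ hi < k) -> Du 0%nat k = 0 /\ Dv 0%nat k = 0.

Lemma exDu n x : ex_derive (Du n) x.
Proof. exists (Du (S n) x). apply is_derive_Reals, sDu. Qed.
Lemma exDv n x : ex_derive (Dv n) x.
Proof. exists (Dv (S n) x). apply is_derive_Reals, sDv. Qed.
Lemma DDu n x : Derive (fun y => Du n y) x = Du (S n) x.
Proof. apply is_derive_unique, is_derive_Reals, sDu. Qed.
Lemma DDv n x : Derive (fun y => Dv n y) x = Dv (S n) x.
Proof. apply is_derive_unique, is_derive_Reals, sDv. Qed.
Lemma exP x : lo <= x <= hi -> ex_derive (pfun f) x.
Proof. intros. eexists. apply (pfun_derive lb ub); auto; lra. Qed.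
Lemma DP x : lo <= x <= hi -> Derive (fun y => pfun f y) x = f (pfun f x).
Proof. intros. apply is_derive_unique. apply (pfun_derive lb ub); auto; lra. Qed.

Ltac exd1 := match goal with
  | |- ex_derive (fun x => Du _ x) _ => apply exDu
  | |- ex_derive (fun x => Dv _ x) _ => apply exDv
  | |- ex_derive (fun x => f x) _ => apply f_derive
  | |- ex_derive (fun x => pfun f x) _ => apply exP; lra
  | |- True => exact I
  end.
Ltac exd := repeat match goal with |- _ /\ _ => split end; exd1.

Ltac exR := apply (ex_RInt_continuous (V:=R_CompleteNormedModule));
  let z := fresh "z" in let Hz := fresh "Hz" in intros z Hz;
  rewrite Rmin_left, Rmax_right in Hz by lra;
  apply (ex_derive_continuous (K:=R_AbsRing) (V:=R_NormedModule));
  auto_derive; exd.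

Lemma test : ex_RInt (fun k => f (pfun f k) * (Du 0%nat k ^ 2 + Dv 0%nat k ^ 2)) lo hi.
Proof. apply (ex_RInt_continuous (V:=R_CompleteNormedModule)). intros z Hz. rewrite Rmin_left, Rmax_right in Hz by lra. apply (ex_derive_continuous (K:=R_AbsRing) (V:=R_NormedModule)). auto_derive. exd. Qed.


Lemma isP g h x y : is_RInt g lo hi x -> is_RInt h lo hi y -> is_RInt (fun k => g k + h k) lo hi (x + y).
Proof. intros H1 H2. exact (is_RInt_plus (V:=R_NormedModule) _ _ _ _ _ _ H1 H2). Qed.
Lemma isS g x c : is_RInt g lo hi x -> is_RInt (fun k => c * g k) lo hi (c * x).
Proof. intros H. exact (is_RInt_scal (V:=R_NormedModule) _ _ _ c _ H). Qed.
Lemma isC g : ex_RInt g lo hi -> is_RInt (V:=R_NormedModule) g lo hi (RInt (V:=R_CompleteNormedModule) g lo hi).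
Proof. intros H. exact (RInt_correct (V:=R_CompleteNormedModule) _ _ _ H). Qed.

Lemma lin7 h c1 c2 c3 c4 c5 c6 c7 g1 g2 g3 g4 g5 g6 g7 :
  (forall k, h k = c1 * g1 k + c2 * g2 k + c3 * g3 k + c4 * g4 k + c5 * g5 k + c6 * g6 k + c7 * g7 k) ->
  ex_RInt g1 lo hi -> ex_RInt g2 lo hi -> ex_RInt g3 lo hi -> ex_RInt g4 lo hi ->
  ex_RInt g5 lo hi -> ex_RInt g6 lo hi -> ex_RInt g7 lo hi ->
  RInt h lo hi = c1 * RInt g1 lo hi + c2 * RInt g2 lo hi + c3 * RInt g3 lo hi + c4 * RInt g4 lo hi
     + c5 * RInt g5 lo hi + c6 * RInt g6 lo hi + c7 * RInt g7 lo hi.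
Proof.
  intros E H1 H2 H3 H4 H5 H6 H7.
  apply (is_RInt_unique (V:=R_CompleteNormedModule)).
  apply (is_RInt_ext (V:=R_NormedModule)
     (fun k => c1 * g1 k + c2 * g2 k + c3 * g3 k + c4 * g4 k + c5 * g5 k + c6 * g6 k + c7 * g7 k)).
  { intros; symmetry; apply E. }
  do 6 (apply isP; [| apply isS, isC; assumption]).
  apply isS, isC; assumption.
Qed.

Local Notation u := (Du 0%nat).
Local Notation v := (Dv 0%nat).
Local Notation p := (pfun f).
Local Notation Wf := (fun k => Du 0%nat k ^ 2 + Dv 0%nat k ^ 2).
Local Notation mf := (fun k => pfun f k * (Du 0%nat k ^ 2 + Dv 0%nat k ^ 2)).
Local Notation M2f := (fun k => pfun f k ^ 2 * (Du 0%nat k ^ 2 + Dv 0%nat k ^ 2)).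
Local Notation Ff := (fun k => f (pfun f k) * (Du 0%nat k ^ 2 + Dv 0%nat k ^ 2)).
Local Notation P1f := (fun k => pfun f k * (Du 0%nat k * Du 1%nat k + Dv 0%nat k * Dv 1%nat k)).
Local Notation Zf := (fun k => Du 0%nat k * Du 1%nat k + Dv 0%nat k * Dv 1%nat k).
Local Notation Kf := (fun k => Du 1%nat k ^ 2 + Dv 1%nat k ^ 2).
Local Notation Jf := (fun k => Dv 0%nat k * Du 1%nat k - Du 0%nat k * Dv 1%nat k).
Local Notation Lf := (fun k => Du 0%nat k * Du 2%nat k + Dv 0%nat k * Dv 2%nat k).

Lemma cDu n x : continuity_pt (Du n) x.
Proof. apply derivable_continuous_pt. exists (Du (S n) x). apply sDu. Qed.
Lemma cDv n x : continuity_pt (Dv n) x.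
Proof. apply derivable_continuous_pt. exists (Dv (S n) x). apply sDv. Qed.

Lemma u_lo : u lo = 0.
Proof. apply zero_left. apply cDu. intros; apply supp; auto. Qed.
Lemma v_lo : v lo = 0.
Proof. apply zero_left. apply cDv. intros; apply supp; auto. Qed.
Lemma u_hi : u hi = 0.
Proof. apply zero_right. apply cDu. intros; apply supp; auto. Qed.
Lemma v_hi : v hi = 0.
Proof. apply zero_right. apply cDv. intros; apply supp; auto. Qed.

Lemma ftc (G dG : R -> R) : (forall x, lo <= x <= hi -> is_derive G x (dG x)) ->
  (forall x, lo <= x <= hi -> ex_derive dG x) -> G lo = 0 -> G hi = 0 ->
  RInt dG lo hi = 0.
Proof.
  intros H1 H2 H3 H4.
  apply (is_RInt_unique (V:=R_CompleteNormedModule)).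
  replace 0 with (minus (G hi) (G lo)).
  2:{ rewrite H3, H4. unfold minus, plus, opp; simpl. ring. }
  apply (is_RInt_derive (V:=R_CompleteNormedModule)).
  - intros x Hx. rewrite Rmin_left, Rmax_right in Hx by lra. auto.
  - intros x Hx. rewrite Rmin_left, Rmax_right in Hx by lra.
    apply (ex_derive_continuous (K:=R_AbsRing) (V:=R_NormedModule)). auto.
Qed.

Ltac L7 := first [intros ?k; cbv beta; ring | exR].

Lemma F1 : RInt Lf lo hi + RInt Kf lo hi = 0.
Proof.
  assert (E : RInt (fun k => Du 0%nat k * Du 2%nat k + Dv 0%nat k * Dv 2%nat k + (Du 1%nat k ^ 2 + Dv 1%nat k ^ 2)) lo hi = 0).
  2:{ rewrite (lin7 _ 1 1 0 0 0 0 0 Lf Kf Wf Wf Wf Wf Wf) in E by L7. lra. }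
  apply (ftc (fun k => Du 0%nat k * Du 1%nat k + Dv 0%nat k * Dv 1%nat k)).
  - intros x Hx. auto_derive. exd. rewrite !DDu, !DDv. ring.
  - intros x Hx. auto_derive. exd.
  - rewrite u_lo, v_lo. ring.
  - rewrite u_hi, v_hi. ring.
Qed.

Lemma F2 : RInt Zf lo hi = 0.
Proof.
  apply (ftc (fun k => (Du 0%nat k ^ 2 + Dv 0%nat k ^ 2) / 2)).
  - intros x Hx. auto_derive. exd. rewrite !DDu, !DDv. field.
  - intros x Hx. auto_derive. exd.
  - rewrite u_lo, v_lo. field.
  - rewrite u_hi, v_hi. field.
Qed.

Lemma F3 : RInt Ff lo hi + 2 * RInt P1f lo hi = 0.
Proof.
  assert (E : RInt (fun k => f (pfun f k) * (Du 0%nat k ^ 2 + Dv 0%nat k ^ 2)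
                      + 2 * (pfun f k * (Du 0%nat k * Du 1%nat k + Dv 0%nat k * Dv 1%nat k))) lo hi = 0).
  2:{ rewrite (lin7 _ 1 2 0 0 0 0 0 Ff P1f Wf Wf Wf Wf Wf) in E by L7. lra. }
  apply (ftc (fun k => pfun f k * (Du 0%nat k ^ 2 + Dv 0%nat k ^ 2))).
  - intros x Hx. auto_derive. exd. rewrite !DDu, !DDv, DP by lra. ring.
  - intros x Hx. auto_derive. exd.
  - rewrite u_lo, v_lo. ring.
  - rewrite u_hi, v_hi. ring.
Qed.

Lemma DX : Delta_x lo hi Du Dv = RInt Kf lo hi - RInt Jf lo hi ^ 2.
Proof.
  unfold Delta_x, variance, inner_re, inner_im. cbv beta.
  rewrite !Rint_RInt by exR.
  rewrite (lin7 (fun k => u k * - Du 2%nat k + v k * - Dv 2%nat k) (-1) 0 0 0 0 0 0 Lf Wf Wf Wf Wf Wf Wf) by L7.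
  rewrite (lin7 (fun k => u k * - Dv 1%nat k + v k * Du 1%nat k) 1 0 0 0 0 0 0 Jf Wf Wf Wf Wf Wf Wf) by L7.
  rewrite (lin7 (fun k => u k * Du 1%nat k - v k * - Dv 1%nat k) 1 0 0 0 0 0 0 Zf Wf Wf Wf Wf Wf Wf) by L7.
  rewrite F2. pose proof F1. nra.
Qed.

Lemma DP_eq : Delta_p f lo hi u v = RInt M2f lo hi - RInt mf lo hi ^ 2.
Proof.
  unfold Delta_p, variance, inner_re, inner_im. cbv beta.
  rewrite !Rint_RInt by exR.
  rewrite (lin7 (fun k => u k * (p k * (p k * u k)) + v k * (p k * (p k * v k))) 1 0 0 0 0 0 0 M2f Wf Wf Wf Wf Wf Wf) by L7.
  rewrite (lin7 (fun k => u k * (p k * u k) + v k * (p k * v k)) 1 0 0 0 0 0 0 mf Wf Wf Wf Wf Wf Wf) by L7.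
  rewrite (lin7 (fun k => u k * (p k * v k) - v k * (p k * u k)) 0 0 0 0 0 0 0 Wf Wf Wf Wf Wf Wf Wf) by L7.
  ring.
Qed.

Lemma quad (Hn : RInt Wf lo hi = 1) lam :
  0 <= lam ^ 2 * (RInt M2f lo hi - RInt mf lo hi ^ 2) - lam * RInt Ff lo hi
       + (RInt Kf lo hi - RInt Jf lo hi ^ 2).
Proof.
  set (m := RInt mf lo hi). set (J := RInt Jf lo hi).
  assert (H : 0 <= RInt (fun k => (lam * (p k - m) * u k + (Du 1%nat k - J * v k)) ^ 2
                                + (lam * (p k - m) * v k + (Dv 1%nat k + J * u k)) ^ 2) lo hi).
  { apply RInt_ge_0; auto. exR. intros; apply Rplus_le_le_0_compat; apply pow2_ge_0. }
  rewrite (lin7 _ (lam ^ 2) (-2 * m * lam ^ 2) (lam ^ 2 * m ^ 2 + J ^ 2) (2 * lam) (-2 * lam * m) 1 (-2 * J)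
             M2f mf Wf P1f Zf Kf Jf) in H by L7.
  rewrite F2, Hn in H. fold m J in H. pose proof F3. nra.
Qed.

Lemma dp_nonneg (Hn : RInt Wf lo hi = 1) : 0 <= RInt M2f lo hi - RInt mf lo hi ^ 2.
Proof.
  set (m := RInt mf lo hi).
  assert (H : 0 <= RInt (fun k => (p k - m) ^ 2 * (u k ^ 2 + v k ^ 2)) lo hi).
  { apply RInt_ge_0; auto. exR. intros; apply Rmult_le_pos; [apply pow2_ge_0| apply Rplus_le_le_0_compat; apply pow2_ge_0]. }
  rewrite (lin7 _ 1 (-2 * m) (m ^ 2) 0 0 0 0 M2f mf Wf Wf Wf Wf Wf) in H by L7.
  rewrite Hn in H. fold m in H. nra.
Qed.

Lemma jensen (Hn : RInt Wf lo hi = 1) :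
  gfun f (RInt M2f lo hi - RInt mf lo hi ^ 2) <= RInt Ff lo hi.
Proof.
  set (s0 := RInt M2f lo hi - RInt mf lo hi ^ 2).
  assert (hs0 : 0 <= s0) by (apply dp_nonneg; auto).
  destruct (tangent s0 hs0) as [D [HD Ht]].
  assert (H : RInt (fun k => (A s0 - D * s0) * (u k ^ 2 + v k ^ 2) + D * (p k ^ 2 * (u k ^ 2 + v k ^ 2))) lo hi
              <= RInt Ff lo hi).
  { apply RInt_le; auto. exR. exR. intros k _. cbv beta. rewrite (f_A (pfun f k)).
    replace ((A s0 - D * s0) * (u k ^ 2 + v k ^ 2) + D * (pfun f k ^ 2 * (u k ^ 2 + v k ^ 2)))
      with ((A s0 + D * (pfun f k ^ 2 - s0)) * (u k ^ 2 + v k ^ 2)) by ring.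
    apply Rmult_le_compat_r. apply Rplus_le_le_0_compat; apply pow2_ge_0.
    apply Ht. apply pow2_ge_0. }
  rewrite (lin7 _ (A s0 - D * s0) D 0 0 0 0 0 Wf M2f Wf Wf Wf Wf Wf) in H by L7.
  rewrite Hn in H. rewrite gfun_A by auto.
  assert (0 <= D * RInt mf lo hi ^ 2) by (apply Rmult_le_pos; auto; apply pow2_ge_0).
  unfold s0 in *. nra.
Qed.

Lemma main_ineq (Hn : Rint (fun k => Du 0%nat k ^ 2 + Dv 0%nat k ^ 2) lo hi = 1) :
  Delta_x lo hi Du Dv * Delta_p f lo hi (Du 0%nat) (Dv 0%nat)
       >= / 4 * gfun f (Delta_p f lo hi (Du 0%nat) (Dv 0%nat)) ^ 2.
Proof.
  rewrite Rint_RInt in Hn by exR.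
  rewrite DX, DP_eq.
  pose proof (quad Hn) as Q. pose proof (dp_nonneg Hn) as N. pose proof (jensen Hn) as Jn.
  set (s0 := RInt M2f lo hi - RInt mf lo hi ^ 2) in *.
  set (F := RInt Ff lo hi) in *.
  set (X := RInt Kf lo hi - RInt Jf lo hi ^ 2) in *.
  assert (G1 : 1 <= gfun f s0) by (rewrite gfun_A by auto; apply A_ge1; auto).
  set (G := gfun f s0) in *.
  destruct N as [Np | Nz].
  - pose proof (Q (F / (2 * s0))) as Q1.
    replace ((F / (2 * s0)) ^ 2 * s0 - F / (2 * s0) * F + X) with (X - F ^ 2 / (4 * s0)) in Q1
      by (field; lra).
    assert (F ^ 2 / (4 * s0) <= X) by lra.
    apply Rle_ge.
    assert (F ^ 2 <= 4 * s0 * X).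
    { apply Rmult_le_compat_l with (r := 4 * s0) in H; [|lra].
      replace (4 * s0 * (F ^ 2 / (4 * s0))) with (F ^ 2) in H by (field; lra). exact H. }
    nra.
  - exfalso. pose proof (Q ((X + 1) / F)) as Q1. rewrite <- Nz in Q1.
    replace ((X + 1) / F * F) with (X + 1) in Q1 by (field; lra). nra.
Qed.

End Main.

Lemma all_parts :
  (forall x y t, 0 <= x -> 0 <= y -> 0 <= t <= 1 ->
     gfun f (t * x + (1 - t) * y) <= t * gfun f x + (1 - t) * gfun f y) /\
  (forall x y, 0 <= x -> x <= y -> gfun f x <= gfun f y) /\
  (forall p, gfun f (p ^ 2) = f p) /\
  (forall (Du Dv : nat -> R -> R) (lo hi : R),
     smooth_seq Du -> smooth_seq Dv ->
     lo <= hi -> lt_kmax f hi -> lt_kmax f (- lo) ->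
     (forall k, (k < lo \/ hi < k) -> Du 0%nat k = 0 /\ Dv 0%nat k = 0) ->
     Rint (fun k => Du 0%nat k ^ 2 + Dv 0%nat k ^ 2) lo hi = 1 ->
     Delta_x lo hi Du Dv * Delta_p f lo hi (Du 0%nat) (Dv 0%nat)
       >= / 4 * gfun f (Delta_p f lo hi (Du 0%nat) (Dv 0%nat)) ^ 2).
Proof.
  split; [|split; [|split]].
  - intros x y t hx hy ht.
    assert (hz : 0 <= t * x + (1 - t) * y) by nra.
    rewrite !gfun_A by auto.
    destruct (tangent _ hz) as [D [HD Ht]].
    pose proof (Ht x hx) as H1. pose proof (Ht y hy) as H2.
    assert (E1 : t * (A (t * x + (1 - t) * y) + D * (x - (t * x + (1 - t) * y))) <= t * A x)
      by (apply Rmult_le_compat_l; lra).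
    assert (E2 : (1 - t) * (A (t * x + (1 - t) * y) + D * (y - (t * x + (1 - t) * y))) <= (1 - t) * A y)
      by (apply Rmult_le_compat_l; lra).
    nra.
  - intros x y hx hxy. rewrite !gfun_A by lra.
    destruct (tangent _ hx) as [D [HD Ht]]. pose proof (Ht y ltac:(lra)). nra.
  - intros q. rewrite gfun_A by apply pow2_ge_0. symmetry; apply f_A.
  - intros Du Dv lo hi sDu sDv hlh [q1 Hq1] [q2 Hq2] supp Hn.
    rewrite Pfun_Pc in Hq1, Hq2.
    assert (Hl : Pc (- q2) < lo) by (rewrite Pc_odd; lra).
    assert (Hlu : - q2 < q1).
    { destruct (Rlt_le_dec (- q2) q1) as [h|h]; auto. apply Pc_le in h. lra. }
    eapply main_ineq with (lb := - q2) (ub := q1); eauto.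
Qed.

End S.

Theorem mainTheorem7
  (a : nat -> R) (f : R -> R)
  (ha : forall n, (1 <= n)%nat -> 0 <= a n)
  (hf : forall p, infinite_sum (fun n => a (S n) * p ^ (2 * S n)) (f p - 1)) :
  (* g is convex on [0, oo) *)
  (forall x y t, 0 <= x -> 0 <= y -> 0 <= t <= 1 ->
     gfun f (t * x + (1 - t) * y) <= t * gfun f x + (1 - t) * gfun f y) /\
  (* g is nondecreasing on [0, oo) *)
  (forall x y, 0 <= x -> x <= y -> gfun f x <= gfun f y) /\
  (* g(p^2) = f(p) *)
  (forall p, gfun f (p ^ 2) = f p) /\
  (* uncertainty relation for unit psi = u + i v in C_c^oo((-kmax, kmax)),
     supported in [lo, hi] with -kmax < lo <= hi < kmax *)
  (forall (Du Dv : nat -> R -> R) (lo hi : R),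
     smooth_seq Du -> smooth_seq Dv ->
     lo <= hi -> lt_kmax f hi -> lt_kmax f (- lo) ->
     (forall k, (k < lo \/ hi < k) -> Du 0%nat k = 0 /\ Dv 0%nat k = 0) ->
     Rint (fun k => Du 0%nat k ^ 2 + Dv 0%nat k ^ 2) lo hi = 1 ->
     Delta_x lo hi Du Dv * Delta_p f lo hi (Du 0%nat) (Dv 0%nat)
       >= / 4 * gfun f (Delta_p f lo hi (Du 0%nat) (Dv 0%nat)) ^ 2).
Proof. exact (all_parts a f ha hf). Qed.
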